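(* Let $\mathcal C$ be a category with binary coproducts and $H\colon\mathcal C\to\mathcal C$ a cia functor. Then for every object $Y$ of $\mathcal C$ the functor $H(-)+Y$ is also a cia functor.
   Context: An algebra $a\colon GA\to A$ for an endofunctor $G$ is corecursive if for every coalgebra $e\colon X\to GX$ there is a unique $s\colon X\to A$ with $s=a\cdot Gs\cdot e$; it is a cia if for every $e\colon X\to GX+A$ there is a unique $s\colon X\to A$ with $s=[a,\mathrm{id}_A]\cdot(Gs+\mathrm{id}_A)\cdot e$. An endofunctor is a cia functor if every corecursive algebra for it is a cia. *)

(* Defs.v *)
Record Category : Type := {
  Ob :> Type;
  Hom : Ob -> Ob -> Type;
  idm : forall A : Ob, Hom A A;
  comp : forall A B E : Ob, Hom B E -> Hom A B -> Hom A E;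
  comp_id_l : forall (A B : Ob) (f : Hom A B), comp A B B (idm B) f = f;
  comp_id_r : forall (A B : Ob) (f : Hom A B), comp A A B f (idm A) = f;
  comp_assoc : forall (A B E D : Ob) (f : Hom E D) (g : Hom B E) (h : Hom A B),
      comp A E D f (comp A B E g h) = comp A B D (comp B E D f g) h
}.
Arguments Hom {c} _ _.
Arguments idm {c} _.
Arguments comp {c A B E} _ _.

Notation "g ∘ f" := (comp g f) (at level 40, left associativity).

Record BinCoproducts (C : Category) : Type := {
  coprod : C -> C -> C;
  cinl : forall A B : C, Hom A (coprod A B);
  cinr : forall A B : C, Hom B (coprod A B);
  copair : forall {A B Z : C}, Hom A Z -> Hom B Z -> Hom (coprod A B) Z;
  copair_inl : forall (A B Z : C) (f : Hom A Z) (g : Hom B Z),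
      copair f g ∘ cinl A B = f;
  copair_inr : forall (A B Z : C) (f : Hom A Z) (g : Hom B Z),
      copair f g ∘ cinr A B = g;
  copair_unique : forall (A B Z : C) (f : Hom A Z) (g : Hom B Z)
      (h : Hom (coprod A B) Z),
      h ∘ cinl A B = f -> h ∘ cinr A B = g -> h = copair f g
}.
Arguments coprod {C} _ _ _.
Arguments cinl {C} _ _ _.
Arguments cinr {C} _ _ _.
Arguments copair {C} _ {A B Z} _ _.

Definition cmap {C : Category} (CP : BinCoproducts C) {A B A' B' : C}
  (f : Hom A A') (g : Hom B B') : Hom (coprod CP A B) (coprod CP A' B') :=
  copair CP (cinl CP A' B' ∘ f) (cinr CP A' B' ∘ g).

Record Functor (C D : Category) : Type := {
  fobj :> C -> D;
  fmap : forall {A B : C}, Hom A B -> Hom (fobj A) (fobj B);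
  fmap_id : forall A : C, fmap (idm A) = idm (fobj A);
  fmap_comp : forall (A B E : C) (f : Hom A B) (g : Hom B E),
      fmap (g ∘ f) = fmap g ∘ fmap f
}.
Arguments fobj {C D} _ _.
Arguments fmap {C D} _ {A B} _.

Definition corecursive {C : Category} (G : Functor C C) (A : C)
  (a : Hom (G A) A) : Prop :=
  forall (X : C) (e : Hom X (G X)),
    exists! s : Hom X A, s = a ∘ fmap G s ∘ e.

Definition cia {C : Category} (CP : BinCoproducts C) (G : Functor C C) (A : C)
  (a : Hom (G A) A) : Prop :=
  forall (X : C) (e : Hom X (coprod CP (G X) A)),
    exists! s : Hom X A,
      s = copair CP a (idm A) ∘ cmap CP (fmap G s) (idm A) ∘ e.

Definition cia_functor {C : Category} (CP : BinCoproducts C) (G : Functor C C)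
  : Prop :=
  forall (A : C) (a : Hom (G A) A), corecursive G A a -> cia CP G A a.

Lemma cmap_id {C : Category} (CP : BinCoproducts C) (A B : C) :
  cmap CP (idm A) (idm B) = idm (coprod CP A B).
Proof.
  unfold cmap. symmetry. apply copair_unique.
  - rewrite comp_id_l, comp_id_r. reflexivity.
  - rewrite comp_id_l, comp_id_r. reflexivity.
Qed.

Lemma cmap_comp {C : Category} (CP : BinCoproducts C) (A B A' B' A'' B'' : C)
  (f : Hom A A') (g : Hom B B') (f' : Hom A' A'') (g' : Hom B' B'') :
  cmap CP (f' ∘ f) (g' ∘ g) = cmap CP f' g' ∘ cmap CP f g.
Proof.
  unfold cmap. symmetry. apply copair_unique.
  - rewrite <- comp_assoc, copair_inl, comp_assoc, copair_inl, comp_assoc.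
    reflexivity.
  - rewrite <- comp_assoc, copair_inr, comp_assoc, copair_inr, comp_assoc.
    reflexivity.
Qed.

Definition plusY {C : Category} (CP : BinCoproducts C) (H : Functor C C) (Y : C)
  : Functor C C.
Proof.
  refine {| fobj := fun X => coprod CP (H X) Y;
            fmap := fun A B f => cmap CP (fmap H f) (idm Y) |}.
  - intros A. rewrite fmap_id. apply cmap_id.
  - intros A B E f g. rewrite fmap_comp, <- cmap_comp, comp_id_l. reflexivity.
Defined.

(* Main.v *)
Require Import Defs.

Section S.
Context {C : Category} (CP : BinCoproducts C).

Lemma cext {A B Z : C} (h k : Hom (coprod CP A B) Z) :
  h ∘ cinl CP A B = k ∘ cinl CP A B -> h ∘ cinr CP A B = k ∘ cinr CP A B -> h = k.
Proof.
  intros H1 H2. rewrite (copair_unique _ CP _ _ _ _ _ h eq_refl eq_refl).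
  rewrite H1, H2. symmetry. apply copair_unique; reflexivity.
Qed.

Lemma copair_inl' {A B Z W : C} (f : Hom A Z) (g : Hom B Z) (x : Hom W A) :
  copair CP f g ∘ (cinl CP A B ∘ x) = f ∘ x.
Proof. rewrite comp_assoc, copair_inl. reflexivity. Qed.
Lemma copair_inr' {A B Z W : C} (f : Hom A Z) (g : Hom B Z) (x : Hom W B) :
  copair CP f g ∘ (cinr CP A B ∘ x) = g ∘ x.
Proof. rewrite comp_assoc, copair_inr. reflexivity. Qed.
End S.

Ltac norm := unfold cmap; repeat (progress (rewrite ?comp_id_l, ?comp_id_r,
  ?copair_inl, ?copair_inr, ?copair_inl', ?copair_inr') || rewrite <- comp_assoc).

Theorem mainTheorem5 (C : Category) (CP : BinCoproducts C) (H : Functor C C) :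
  cia_functor CP H -> forall Y : C, cia_functor CP (plusY CP H Y).
Proof.
  intros Hcia Y A a Hcor.
  set (al := a ∘ cinl CP (H A) Y).
  set (be := a ∘ cinr CP (H A) Y).
  assert (Hal : corecursive H A al).
  { intros X e.
    destruct (Hcor X (cinl CP (H X) Y ∘ e)) as [s [Hs Hu]].
    assert (K : forall t : Hom X A,
      a ∘ fmap (plusY CP H Y) t ∘ (cinl CP (H X) Y ∘ e) = al ∘ fmap H t ∘ e).
    { intros t. simpl. unfold al. norm. reflexivity. }
    exists s. split.
    - rewrite <- K. exact Hs.
    - intros t Ht. apply Hu. rewrite K. exact Ht. }
  specialize (Hcia A al Hal).
  intros X e.
  set (r := copair CP (copair CP (cinl CP (H X) A) (cinr CP (H X) A ∘ be))
                      (cinr CP (H X) A)).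
  assert (K : forall t : Hom X A,
    copair CP a (idm A) ∘ cmap CP (fmap (plusY CP H Y) t) (idm A) ∘ e =
    copair CP al (idm A) ∘ cmap CP (fmap H t) (idm A) ∘ (r ∘ e)).
  { intros t.
    assert (E : copair CP a (idm A) ∘ cmap CP (fmap (plusY CP H Y) t) (idm A) =
                copair CP al (idm A) ∘ cmap CP (fmap H t) (idm A) ∘ r).
    { simpl. apply cext; [apply cext|]; unfold r, al, be; norm; reflexivity. }
    rewrite E. rewrite <- !comp_assoc. reflexivity. }
  destruct (Hcia X (r ∘ e)) as [s [Hs Hu]].
  exists s. split.
  - rewrite K. exact Hs.
  - intros t Ht. apply Hu. rewrite <- K. exact Ht.
Qed.
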